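(* Let $G$ be the complete graph on $\{0,\dots,n\}$ oriented by $i\to j$ iff $i<j$. Then the polynomials $\mathbf{P}_s$, $s\in S_n$, form a basis of the space $$\operatorname{soc}(\mathcal{P}(G)):=\operatorname{span}\{p_{G\setminus T}: T\in\mathbb{B}(G)\}\subset\mathbb{R}[t(1),\dots,t(n)].$$
   Context: Polynomials are in variables $t=(t(1),\dots,t(n))$, and set $t(0):=0$. To the edge of $G$ between $i<j$ (vector $e_j-e_i$, $e_0:=0$) associate $p_x(t)=t(j)-t(i)$; for a set $Y$ of edges oriented as in $G$, $p_Y:=\prod_{x\in Y}p_x$. $\mathbb{B}(G)$ is the set of spanning trees of $G$ (edge sets), and $G\setminus T$ is the set of edges of $G$ not in $T$. $S_n$ is the set of permutations of $\{1,\dots,n\}$, extended by $s(0):=0$. For $s\in S_n$, $G^s$ is the reorientation of $G$ in which the edge $\{s(i),s(j)\}$ with $i<j$ is oriented $s(i)\to s(j)$, with associated polynomial $t(s(j))-t(s(i))$. The path tree $T_s$ has edges $\{s(k-1),s(k)\}$, $k=1,\dots,n$. Define $\mathbf{P}_s:=\prod (t(s(j))-t(s(i)))$, the product over all pairs $0\le i<j\le n$ such that $\{s(i),s(j)\}$ is not an edge of $T_s$ (i.e. $j\ne i+1$); this is $p$ of $G^s\setminus T_s$ with edges oriented as in $G^s$. *)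

(* Defs.v *)
From HB Require Import structures.
From mathcomp Require Import all_boot all_order all_algebra all_fingroup.
Set Implicit Arguments. Unset Strict Implicit. Unset Printing Implicit Defensive.
Import Order.TTheory GRing.Theory Num.Theory.
Local Open Scope ring_scope.

(* Vertices of G are 'I_n.+1 = {0,...,n}.  A point t = (t(1),...,t(n)) is
   t : 'I_n -> R; ext t extends it to vertices with t(0) := 0
   (vertex k >= 1 corresponds to variable index k-1). *)
Definition ext (R : ringType) (n : nat) (t : 'I_n -> R) (i : 'I_n.+1) : R :=
  match unlift ord0 i with Some j => t j | None => 0 end.

Definition tree_adj (n : nat) (T : {set {set 'I_n.+1}}) : rel 'I_n.+1 :=
  fun u v => [set u; v] \in T.

Definition spanning_tree (n : nat) (T : {set {set 'I_n.+1}}) : bool :=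
  [&& [forall e in T, #|e| == 2%N], #|T| == n
    & [forall u, forall v, connect (tree_adj T) u v]].

Definition pGT (R : ringType) (n : nat) (T : {set {set 'I_n.+1}})
    (t : 'I_n.+1 -> R) : R :=
  \prod_(i : 'I_n.+1) \prod_(j : 'I_n.+1 | (i < j)%N && ([set i; j] \notin T))
     (t j - t i).

(* Elements of S_n: permutations of {0..n} fixing 0. *)
Definition fix0 (n : nat) (s : {perm 'I_n.+1}) : bool := s ord0 == ord0.

Definition Ps (R : ringType) (n : nat) (s : {perm 'I_n.+1})
    (t : 'I_n.+1 -> R) : R :=
  \prod_(i : 'I_n.+1) \prod_(j : 'I_n.+1 | (i < j)%N && (val j != (val i).+1))
     (t (s j) - t (s i)).

(* Main.v *)
Require Import Defs.
From HB Require Import structures.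
From mathcomp Require Import all_boot all_order all_algebra all_fingroup.
From mathcomp Require Import ring zify.
Set Implicit Arguments. Unset Strict Implicit. Unset Printing Implicit Defensive.
Import Order.TTheory GRing.Theory Num.Theory.
Local Open Scope ring_scope.

Fixpoint Pp (R : comRingType) (X : Type) (t : X -> R) (l : seq X) : R :=
  match l with
  | [::] => 1
  | x :: l' => (\prod_(u <- behead l') (t u - t x)) * Pp t l'
  end.

Fixpoint FP (R : comRingType) (X : Type) (P : X -> X -> bool) (t : X -> R) (l : seq X) : R :=
  match l with
  | [::] => 1
  | x :: l' => (\prod_(u <- l' | P x u) (t u - t x)) * FP P t l'
  end.

Lemma prod_sub_swap (R : comRingType) (X : Type) (t : X -> R) (x : X) (q : seq X) :
  \prod_(u <- q) (t u - t x) = (-1) ^+ size q * \prod_(u <- q) (t x - t u).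
Proof.
elim: q => [|y q IH]; first by rewrite !big_nil expr0 mulr1.
rewrite !big_cons IH /= exprS; ring.
Qed.

Lemma Pp_rcons (R : comRingType) (X : Type) (t : X -> R) (p : seq X) (w x : X) :
  Pp t (rcons (rcons p w) x) = Pp t (rcons p w) * \prod_(u <- p) (t x - t u).
Proof.
elim: p => [|y p IH].
  by rewrite /= !big_nil !mulr1.
rewrite [rcons _ _]/= [Pp _ (y :: _)]/= IH.
rewrite [rcons (y :: p) w]/= [Pp _ (y :: rcons p w)]/= big_cons.
case: p IH => [|z p] IH /=.
  by rewrite !big_cons !big_nil; ring.
rewrite -!cats1 !big_cat !big_cons !big_nil /=; ring.
Qed.

Lemma Pp_insert (R : comRingType) (X : Type) (t : X -> R) (p : seq X) (w x a : X) (q : seq X) :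
  Pp t (p ++ w :: x :: a :: q) =
  Pp t (p ++ w :: a :: q) * (t a - t w) * \prod_(u <- q) (t u - t x) * \prod_(u <- p) (t x - t u).
Proof.
elim: p => [|y p IH].
  by rewrite /= !big_cons !big_nil; ring.
rewrite cat_cons [Pp _ (y :: _)]/= IH [Pp _ (y :: (p ++ _))]/= big_cons.
case: p IH => [|z p] IH /=.
  by rewrite !big_cons; ring.
rewrite !big_cat !big_cons /=; ring.
Qed.
Definition inspan (R : comRingType) (X : eqType) (G : pred (seq X)) (f : (X -> R) -> R) :=
  exists L : seq (R * seq X), all (fun cl => G cl.2) L /\
    forall t, f t = \sum_(cl <- L) cl.1 * Pp t cl.2.

Lemma inspan_ext (R : comRingType) (X : eqType) (G : pred (seq X)) (f g : (X -> R) -> R) :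
  (forall t, f t = g t) -> inspan G f -> inspan G g.
Proof. by move=> fg [L [HL Hf]]; exists L; split => // t; rewrite -fg. Qed.

Lemma inspan_mono (R : comRingType) (X : eqType) (G G' : pred (seq X)) (f : (X -> R) -> R) :
  (forall l, G l -> G' l) -> inspan G f -> inspan G' f.
Proof.
move=> GG [L [HL Hf]]; exists L; split => //.
by apply/allP => cl /(allP HL); apply: GG.
Qed.

Lemma inspan_add (R : comRingType) (X : eqType) (G : pred (seq X)) (f g : (X -> R) -> R) :
  inspan G f -> inspan G g -> inspan G (fun t => f t + g t).
Proof.
move=> [L1 [H1 E1]] [L2 [H2 E2]]; exists (L1 ++ L2); split.
  by rewrite all_cat H1 H2.
by move=> t; rewrite big_cat /= E1 E2.
Qed.

Lemma inspan_scale (R : comRingType) (X : eqType) (G : pred (seq X)) (c : R) (f : (X -> R) -> R) :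
  inspan G f -> inspan G (fun t => c * f t).
Proof.
move=> [L [H E]]; exists [seq (c * cl.1, cl.2) | cl <- L]; split.
  by rewrite all_map.
move=> t; rewrite E big_map mulr_sumr; apply: eq_bigr => cl _ /=; ring.
Qed.

Lemma inspan_one (R : comRingType) (X : eqType) (G : pred (seq X)) (l : seq X) :
  G l -> inspan G (fun t : X -> R => Pp t l).
Proof.
move=> Gl; exists [:: (1, l)]; split; first by rewrite /= Gl.
by move=> t; rewrite big_cons big_nil /= mul1r addr0.
Qed.

Lemma inspan_sum (R : comRingType) (X : eqType) (G : pred (seq X)) (A : eqType) (s : seq A)
   (F : A -> (X -> R) -> R) :
  (forall a, a \in s -> inspan G (F a)) -> inspan G (fun t => \sum_(a <- s) F a t).
Proof.
elim: s => [|a s IH] HF.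
  by exists [::]; split => // t; rewrite !big_nil.
apply: inspan_ext; last first.
  apply: inspan_add; [apply: HF; exact: mem_head| apply: IH => b bs; apply: HF].
  by rewrite inE bs orbT.
by move=> t; rewrite big_cons.
Qed.

Definition Good (X : eqType) (V : seq X) (r : X) : pred (seq X) :=
  fun l => perm_eq l V && (head r l == r).

Lemma leaf_span (R : comRingType) (X : eqType) (x : X) (q p : seq X) (w : X) :
  inspan (Good (x :: p ++ w :: q) (head w p))
    (fun t : X -> R => Pp t (p ++ w :: q) * \prod_(u <- p) (t x - t u) * \prod_(u <- q) (t x - t u)).
Proof.
elim: q p w => [|a q IH] p w.
  apply: inspan_ext; last first.
    apply: (@inspan_one _ _ _ (p ++ [:: w; x])).
    rewrite /Good /= perm_sym -cat1s perm_catC /= cats1 -!cats1 -catA perm_refl /=.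
    by case: p.
  move=> t; rewrite big_nil mulr1.
  by rewrite (_ : p ++ [:: w; x] = rcons (rcons p w) x) ?Pp_rcons ?cats1 // -!cats1 -catA.
have Hh : head a (rcons p w) = head w p by case: p.
have H1 := IH (rcons p w) a.
rewrite cat_rcons in H1.
rewrite Hh in H1.
have H2 : inspan (Good (x :: p ++ w :: a :: q) (head w p))
             (fun t : X -> R => (- (-1) ^+ size q) * Pp t (p ++ w :: x :: a :: q)).
  apply: inspan_scale; apply: inspan_one.
  rewrite /Good; apply/andP; split; last by case: (p).
  rewrite perm_sym -cat1s perm_catCA /= perm_cat2l.
  by rewrite -(cat1s x) -(cat1s w) perm_catCA.
apply: inspan_ext; last by apply: inspan_add H1 H2.
move=> t /=.
rewrite Pp_insert prod_sub_swap -cats1 big_cat /= !big_cons !big_nil.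
set A := Pp t _. set B := \prod_(u <- p) _. set C := \prod_(u <- q) _.
set S := (-1) ^+ size q.
have e : S * S = 1 by rewrite /S -exprMn mulrNN mulr1 expr1n.
transitivity (A * B * C * ((t x - t w) - (S * S) * (t a - t w))); first ring.
rewrite e; ring.
Qed.

Lemma FP_rcons (R : comRingType) (X : Type) (P : X -> X -> bool) (t : X -> R) (l : seq X) (x : X) :
  FP P t (rcons l x) = FP P t l * \prod_(u <- l | P u x) (t x - t u).
Proof.
elim: l => [|y l IH] /=; first by rewrite !big_nil.
rewrite IH -cats1 big_cat big_cons big_nil /= big_cons.
case: (P y x); case: (P y x) => //=; rewrite ?mulr1; ring.
Qed.

Lemma inspan_mul (R : comRingType) (X : eqType) (G G' : pred (seq X)) (f h : (X -> R) -> R) :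
  inspan G f ->
  (forall l, G l -> inspan G' (fun t => Pp t l * h t)) ->
  inspan G' (fun t => f t * h t).
Proof.
move=> [L [HL Ef]] Hl.
apply: inspan_ext; last first.
  apply: (@inspan_sum _ _ _ _ L (fun cl t => cl.1 * (Pp t cl.2 * h t))) => cl /(allP HL) Gc.
  by apply: inspan_scale; apply: Hl.
by move=> t /=; rewrite Ef mulr_suml; apply: eq_bigr => cl _; rewrite mulrA.
Qed.

Definition treeprop (X : eqType) (P : X -> X -> bool) (r : X) (W : seq X) :=
  forall k, (0 < k < size W)%N -> exists2 w0, w0 \in take k W &
     forall u, u \in take k W -> P u (nth r W k) = (u != w0).

Lemma big_notin_pred (R : comRingType) (X : eqType) (s : seq X) (w : X) (F : X -> R) :
  w \notin s -> \prod_(u <- s | u != w) F u = \prod_(u <- s) F u.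
Proof.
elim: s => [|y s IH]; first by rewrite !big_nil.
rewrite inE negb_or => /andP [yw ws]; rewrite !big_cons eq_sym yw IH //.
Qed.

Lemma tree_span (R : comRingType) (X : eqType) (P : X -> X -> bool) (r : X) (W : seq X) :
  uniq W -> W != [::] -> head r W = r -> treeprop P r W ->
  inspan (Good W r) (fun t : X -> R => FP P t W).
Proof.
elim/last_ind: W => [//|W x IH].
rewrite rcons_uniq => /andP [xW uW] _.
case: (eqVneq W [::]) => [->|WN] /=.
  move=> <- _; apply: inspan_ext; last first.
    by apply: (@inspan_one _ _ _ [:: x]); rewrite /Good /= perm_refl eqxx.
  by move=> t /=; rewrite ?big_nil.
have hW : head r (rcons W x) = head r W by case: (W) WN.
rewrite hW => hr tp.
have tpW : treeprop P r W.
  move=> k /andP [k0 kW].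
  have [|w0 w0in Hw0] := tp k; first by rewrite size_rcons k0 /= ltnS ltnW.
  have tk : take k (rcons W x) = take k W by rewrite -cats1 takel_cat // ltnW.
  rewrite tk in w0in Hw0; exists w0 => // u uin.
  by rewrite -Hw0 // nth_rcons kW.
have [|w0 w0in Hw0] := tp (size W).
  by rewrite size_rcons ltnSn andbT lt0n size_eq0.
rewrite -cats1 take_size_cat // in w0in Hw0.
rewrite nth_cat ltnn subnn /= in Hw0.
have IH' := IH uW WN hr tpW.
apply: (@inspan_ext _ _ _ (fun t => FP P t W * \prod_(u <- W | P u x) (t x - t u))).
  by move=> t; rewrite FP_rcons.
apply: (inspan_mul IH') => l /andP [pl hl].
have ul : uniq l by rewrite (perm_uniq pl).
have w0l : w0 \in l by rewrite (perm_mem pl).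
move: pl hl ul; case/splitPr: w0l => p q pl hl ul.
have hpq : head w0 p = r by move: hl; case: (p) => [/eqP|y p' /eqP] //=.
apply: (@inspan_mono _ _ (Good (x :: p ++ w0 :: q) (head w0 p))).
  move=> l' /andP [pl' hl']; apply/andP; split; last by rewrite -hpq.
  rewrite (perm_trans pl') // perm_sym perm_rcons perm_cons perm_sym //.
apply: inspan_ext; last by apply: leaf_span.
move=> t /=.
have eh : \prod_(u <- W | P u x) (t x - t u) = \prod_(u <- p) (t x - t u) * \prod_(u <- q) (t x - t u).
  rewrite big_seq_cond (eq_bigl (fun u => (u \in W) && (u != w0))); last first.
    by move=> u; case: (boolP (u \in W)) => //= uW'; rewrite Hw0.
  rewrite -big_seq_cond -(perm_big _ pl) big_cat /= big_cons eqxx /=.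
  move: ul; rewrite cat_uniq /= negb_or => /and3P [_ /andP [w0p _] /andP [w0q _]].
  by rewrite !big_notin_pred.
by rewrite eh mulrA.
Qed.

Lemma FP_front (R : comRingType) (X : eqType) (P : X -> X -> bool)
  (symP : forall u v, P u v = P v u) (x : X) (q p : seq X) :
  exists e : R, e * e = 1 /\ forall t, FP P t (p ++ x :: q) = e * FP P t (x :: p ++ q).
Proof.
elim: p => [|y p [e [ee IH]]].
  by exists 1; split; [rewrite mulr1 | move=> t; rewrite mul1r].
have Hperm : perm_eq (p ++ x :: q) (x :: p ++ q) by rewrite -cat1s perm_catCA.
case Pxy : (P x y).
  exists (- e); split; first by rewrite mulrNN.
  move=> t; rewrite cat_cons [FP _ _ (y :: _)]/= IH /= (perm_big _ Hperm) /=.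
  rewrite !big_cons Pxy -symP Pxy; ring.
exists e; split => //.
move=> t; rewrite cat_cons [FP _ _ (y :: _)]/= IH /= (perm_big _ Hperm) /=.
rewrite !big_cons Pxy -symP Pxy; ring.
Qed.

Lemma FP_perm (R : comRingType) (X : eqType) (P : X -> X -> bool)
  (symP : forall u v, P u v = P v u) (W W' : seq X) :
  perm_eq W W' -> exists e : R, e * e = 1 /\ forall t, FP P t W = e * FP P t W'.
Proof.
elim: W W' => [|x W1 IH] W' pW.
  move: pW; rewrite perm_sym => /perm_nilP ->.
  by exists 1; split; [rewrite mulr1 | move=> t; rewrite mul1r].
have xW' : x \in W' by rewrite -(perm_mem pW) mem_head.
move: pW; case/splitPr: xW' => p q pW.
have [e1 [ee1 E1]] := @FP_front R X P symP x q p.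
have pW1 : perm_eq W1 (p ++ q).
  by rewrite -(perm_cons x) (perm_trans pW) // -cat1s perm_catCA.
have [e2 [ee2 E2]] := IH _ pW1.
exists (e1 * e2); split.
  by rewrite mulrACA ee1 ee2 mulr1.
move=> t; rewrite E1 /= E2 (perm_big _ pW1).
transitivity ((e1 * e1) * e2 * (\prod_(u <- p ++ q | P x u) (t u - t x) * FP P t (p ++ q))); last by ring.
by rewrite ee1 mul1r; ring.
Qed.

Definition cwp (R : ringType) (X : eqType) (F : (X -> R) -> R) :=
  forall (t : X -> R) (u : X), exists p : {poly R},
    forall t', (forall w, w != u -> t' w = t w) -> F t' = p.[t' u].

Lemma cwp_const (R : comRingType) (X : eqType) (c : R) : cwp (fun _ : X -> R => c).
Proof. by move=> t u; exists c%:P => t' _; rewrite hornerC. Qed.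

Lemma cwp_coord (R : comRingType) (X : eqType) (w : X) : cwp (fun t : X -> R => t w).
Proof.
move=> t u; case: (eqVneq w u) => [->|wu].
  by exists 'X => t' _; rewrite hornerX.
by exists (t w)%:P => t' H; rewrite hornerC H.
Qed.

Lemma cwp_add (R : comRingType) (X : eqType) (F G : (X -> R) -> R) :
  cwp F -> cwp G -> cwp (fun t => F t + G t).
Proof.
move=> HF HG t u; have [p Hp] := HF t u; have [q Hq] := HG t u.
by exists (p + q) => t' H; rewrite hornerD Hp // Hq.
Qed.

Lemma cwp_mul (R : comRingType) (X : eqType) (F G : (X -> R) -> R) :
  cwp F -> cwp G -> cwp (fun t => F t * G t).
Proof.
move=> HF HG t u; have [p Hp] := HF t u; have [q Hq] := HG t u.
by exists (p * q) => t' H; rewrite hornerM Hp // Hq.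
Qed.

Lemma cwp_opp (R : comRingType) (X : eqType) (F : (X -> R) -> R) :
  cwp F -> cwp (fun t => - F t).
Proof.
move=> HF t u; have [p Hp] := HF t u.
by exists (- p) => t' H; rewrite hornerN Hp.
Qed.

Lemma cwp_prod (R : comRingType) (X : eqType) (A : Type) (s : seq A) (F : A -> (X -> R) -> R) :
  (forall a, cwp (F a)) -> cwp (fun t => \prod_(a <- s) F a t).
Proof.
move=> HF; elim: s => [|a s IH].
  by move=> t u; exists 1 => t' _; rewrite big_nil hornerC.
move=> t u; have [p Hp] := cwp_mul (HF a) IH t u.
by exists p => t' H; rewrite big_cons Hp.
Qed.

Lemma cwp_sum (R : comRingType) (X : eqType) (A : Type) (s : seq A) (F : A -> (X -> R) -> R) :
  (forall a, cwp (F a)) -> cwp (fun t => \sum_(a <- s) F a t).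
Proof.
move=> HF; elim: s => [|a s IH].
  by move=> t u; exists 0 => t' _; rewrite big_nil hornerC.
move=> t u; have [p Hp] := cwp_add (HF a) IH t u.
by exists p => t' H; rewrite big_cons Hp.
Qed.

Lemma cwp_Pp (R : comRingType) (X : eqType) (l : seq X) : cwp (fun t : X -> R => Pp t l).
Proof.
elim: l => [|x l IH] /=; first exact: cwp_const.
apply: cwp_mul => //; apply: cwp_prod => a.
by apply: cwp_add; [apply: cwp_coord | apply: cwp_opp; apply: cwp_coord].
Qed.

Lemma poly_vanish (R : realFieldType) (p : {poly R}) (a : R) :
  (forall x, x != a -> p.[x] = 0) -> p = 0.
Proof.
move=> H; apply/eqP; apply/negPn/negP => p0.
set rs := [seq a + (i.+1)%:R | i <- iota 0 (size p)].
have := max_poly_roots p0 (rs := rs).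
rewrite size_map size_iota ltnn => Hm.
suff [h1 h2] : all (root p) rs /\ uniq rs by have := Hm h1 h2.
split.
  apply/allP => x /mapP [i _ ->]; rewrite /root; apply/eqP/H.
  by rewrite -subr_eq0 addrC addKr pnatr_eq0.
rewrite map_inj_uniq ?iota_uniq // => i j /addrI /eqP.
by rewrite eqr_nat => /eqP [].
Qed.

Lemma vanish (R : realFieldType) (X : eqType) (r : X) (S : seq X) (G : (X -> R) -> R) :
  r \notin S -> cwp G ->
  (forall t, (forall u, u \in S -> t u != t r) -> G t = 0) -> forall t, G t = 0.
Proof.
elim: S => [|u S IH] rS cG HG; first by move=> t; apply: HG.
move: rS; rewrite inE negb_or => /andP [ru rS].
apply: IH => // t ht.
have [p Hp] := cG t u.
have p0 : p = 0.
  apply: (poly_vanish (a := t r)) => x xr.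
  pose t' := fun w => if w == u then x else t w.
  have -> : p.[x] = p.[t' u] by rewrite /t' eqxx.
  rewrite -Hp; last by move=> w /negbTE wu; rewrite /t' wu.
  apply: HG => w; rewrite /t' (negbTE ru) inE.
  case: (eqVneq w u) => [_ |wu] //= wS.
  exact: ht.
by rewrite (Hp t) // p0 horner0.
Qed.

Lemma Pp_eq (R : comRingType) (X : eqType) (t t' : X -> R) (l : seq X) :
  (forall u, u \in l -> t u = t' u) -> Pp t l = Pp t' l.
Proof.
elim: l => [|x l IH] //= H.
rewrite IH; last by move=> u ul; apply: H; rewrite inE ul orbT.
congr (_ * _); rewrite big_seq [RHS]big_seq; apply: eq_bigr => u ul.
rewrite !H ?mem_head //; rewrite inE; case: (l) ul => //= y l' ul.
by rewrite inE ul !orbT.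
Qed.

Lemma prod_zero (R : comRingType) (X : eqType) (s : seq X) (x : X) (F : X -> R) :
  x \in s -> F x = 0 -> \prod_(u <- s) F u = 0.
Proof.
by move=> xs Fx; rewrite (big_rem x xs) /= Fx mul0r.
Qed.

Lemma sum_split (R : comRingType) (A : Type) (s : seq A) (h : pred A) (F : A -> R) :
  \sum_(a <- s) F a = \sum_(a <- s | h a) F a + \sum_(a <- s | ~~ h a) F a.
Proof. by rewrite (bigID h). Qed.

Definition headis (X : eqType) (v : X) (l : seq X) := if l is y :: _ then y == v else false.

Lemma indep (R : realFieldType) (X : eqType) (r : X) (m : nat) :
  forall (vs : seq X), size vs = m -> uniq (r :: vs) ->
  forall L : seq (R * seq X), all (fun cl => perm_eq cl.2 vs) L -> uniq (map snd L) ->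
  (forall t, \sum_(cl <- L) cl.1 * Pp t (r :: cl.2) = 0) ->
  forall cl, cl \in L -> cl.1 = 0.
Proof.
elim: m => [|m IH] vs.
  move/eqP; rewrite size_eq0 => /eqP -> _ L HL uL Hs.
  have H0 : forall cl, cl \in L -> cl.2 = [::].
    by move=> cl /(allP HL) /= /perm_nilP.
  case: L HL uL Hs H0 => [//|cl0 L] _ uL Hs H0.
  have L0 : L = [::].
    case: L uL H0 {Hs} => [//|cl1 L] /= /andP [nin _] H0.
    move: nin; rewrite inE H0 ?mem_head // H0 //.
    by rewrite !inE eqxx orbT.
  subst L => cl; rewrite inE => /eqP ->.
  have := Hs (fun _ => 0); rewrite big_cons big_nil H0 ?mem_head //=.
  by rewrite big_nil !mulr1 addr0.
move=> svs urvs L HL uL Hs cl0 cl0L.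
have pl0 : perm_eq cl0.2 vs by apply: (allP HL).
case El0 : cl0.2 pl0 => [|v l0] pl0.
  by move: (perm_size pl0); rewrite svs.
have vvs : v \in vs by rewrite -(perm_mem pl0) mem_head.
move: urvs; rewrite /= => /andP [rvs uvs].
have rv : r != v by apply: contraNneq rvs => ->.
set Lv := [seq (cl.1, behead cl.2) | cl <- L & headis v cl.2].
set vs2 := rem v vs.
have Q0 : forall t, \prod_(u <- vs2) (t u - t r) * \sum_(cl <- Lv) cl.1 * Pp t (r :: cl.2) = 0.
  move=> t.
  pose t' := fun u => if u == v then t r else t u.
  have Z : \sum_(cl <- L | ~~ headis v cl.2) cl.1 * Pp t' (r :: cl.2) = 0.
    rewrite big_seq_cond big1 //.
    move=> cl /andP [clL nh].
    have pcl : perm_eq cl.2 vs by apply: (allP HL).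
    case Ecl : cl.2 pcl nh => [|y l'] pcl nh.
      by move: (perm_size pcl); rewrite svs.
    have yv : y != v by move: nh; rewrite /headis.
    have vl' : v \in l'.
      by move: vvs; rewrite -(perm_mem pcl) inE eq_sym (negbTE yv).
    rewrite /= (@prod_zero _ _ l' v) ?mul0r ?mulr0 //.
    by rewrite /t' eqxx (negbTE rv) subrr.
  transitivity (\sum_(cl <- L) cl.1 * Pp t' (r :: cl.2)); last exact: Hs t'.
  rewrite [RHS](sum_split _ (fun cl => headis v cl.2)) Z addr0.
  rewrite big_map big_filter mulr_sumr [LHS](@big_seq_cond _ _ _ _ L) [RHS](@big_seq_cond _ _ _ _ L).
  apply: eq_bigr => cl /andP [clL hv].
  have pcl : perm_eq cl.2 vs by apply: (allP HL).
  case Ecl : cl.2 pcl hv => [|y l'] pcl //= /eqP yv; subst y.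
  have ucl : uniq (v :: l') by rewrite (perm_uniq pcl).
  move: (ucl) => /= /andP [vl' ul'].
  have pl' : perm_eq l' vs2.
    by rewrite -(perm_cons v) (perm_trans pcl) // perm_to_rem.
  have rl' : r \notin l' by apply: contra rvs; rewrite -(perm_mem pcl) inE orbC => ->.
  have tl : forall u, u \in l' -> t' u = t u.
    by move=> u ul2; rewrite /t'; case: (eqVneq u v) => // uv; move: vl'; rewrite -uv ul2.
  have tr : t' r = t r by rewrite /t' (negbTE rv).
  have tv : t' v = t r by rewrite /t' eqxx.
  have e1 : \prod_(u <- l') (t' u - t' r) = \prod_(u <- vs2) (t u - t r).
    rewrite -(perm_big _ pl') big_seq [RHS]big_seq; apply: eq_bigr => u ul2.
    by rewrite tl // tr.
  have e2 : \prod_(u <- behead l') (t' u - t' v) = \prod_(u <- behead l') (t u - t r).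
    rewrite big_seq [RHS]big_seq; apply: eq_bigr => u ul2.
    by rewrite tl ?tv //; move: ul2; case: (l') => //= y l2 ul2; rewrite inE ul2 orbT.
  have e3 : Pp t' l' = Pp t l' by apply: Pp_eq.
  rewrite e1 e2 e3; ring.
have vsz : size vs2 = m by rewrite /vs2 size_rem // svs.
have urvs2 : uniq (r :: vs2).
  rewrite /= rem_uniq // andbT; apply: contra rvs; exact: mem_rem.
have rvs2 : r \notin vs2 by move: urvs2 => /andP [].
have G0 : forall t, \sum_(cl <- Lv) cl.1 * Pp t (r :: cl.2) = 0.
  apply: (vanish rvs2).
    by apply: cwp_sum => cl; apply: cwp_mul; [apply: cwp_const | apply: cwp_Pp].
  move=> t ht; have := Q0 t; move/eqP; rewrite mulf_eq0 => /orP [H|/eqP //].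
  exfalso; move: H; apply/negP; rewrite prodf_seq_neq0; apply/allP => u uvs2 /=.
  by rewrite subr_eq0 ht.
have HLv : all (fun cl => perm_eq cl.2 vs2) Lv.
  apply/allP => cl /mapP [cl' ]; rewrite mem_filter => /andP [hv cl'L] -> /=.
  have pcl : perm_eq cl'.2 vs by apply: (allP HL).
  move: hv pcl; case: (cl'.2) => [|y l'] //= /eqP -> pcl.
  by rewrite -(perm_cons v) (perm_trans pcl) // perm_to_rem.
have uLv : uniq (map snd Lv).
  rewrite /Lv -map_comp.
  rewrite (eq_map (g := behead \o snd)) // map_comp -filter_map.
  rewrite map_inj_in_uniq; first by apply: filter_uniq.
  move=> a b; rewrite !mem_filter => /andP [ha _] /andP [hb _].
  by case: a ha => [|x a] //= /eqP ->; case: b hb => [|y b] //= /eqP -> ->.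
apply: (IH vs2 vsz urvs2 Lv HLv uLv G0 (cl0.1, l0)).
apply/mapP; exists cl0; last by rewrite El0.
by rewrite mem_filter cl0L El0 /= eqxx.
Qed.

Lemma Pp_iota (R : comRingType) (X : Type) (t : X -> R) (f : nat -> X) (k m : nat) :
  Pp t (map f (iota m k)) =
  \prod_(i <- iota m k) \prod_(j <- iota m k | (i < j)%N && (j != i.+1)) (t (f j) - t (f i)).
Proof.
elim: k m => [|k IH] m; first by rewrite /= big_nil.
rewrite [iota m k.+1]/= map_cons [Pp _ _]/= IH big_cons; congr (_ * _).
  rewrite big_cons ltnn /=.
  case: k {IH} => [|k]; first by rewrite /= !big_nil.
  rewrite [iota m.+1 k.+1]/= big_cons ltnSn eqxx /= big_map.
  rewrite big_seq_cond [RHS]big_seq_cond; apply: eq_bigl => j.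
  case: (boolP (j \in iota m.+2 k)) => //=; rewrite mem_iota => /andP [h _].
  by rewrite (ltn_trans (ltnSn m)) //= neq_ltn h orbT.
apply: eq_big_seq => i; rewrite mem_iota => /andP [hi _].
rewrite big_cons ltnNge ltnW //.
Qed.

Lemma FP_iota (R : comRingType) (X : Type) (P : X -> X -> bool) (t : X -> R) (f : nat -> X) (k m : nat) :
  FP P t (map f (iota m k)) =
  \prod_(i <- iota m k) \prod_(j <- iota m k | (i < j)%N && P (f i) (f j)) (t (f j) - t (f i)).
Proof.
elim: k m => [|k IH] m; first by rewrite /= big_nil.
rewrite [iota m k.+1]/= map_cons [FP _ _ _]/= IH big_cons; congr (_ * _).
  rewrite big_cons ltnn /= big_map.
  rewrite big_seq_cond [RHS]big_seq_cond; apply: eq_bigl => j.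
  case: (boolP (j \in iota m.+1 k)) => //=; rewrite mem_iota => /andP [h _].
  by rewrite h.
apply: eq_big_seq => i; rewrite mem_iota => /andP [hi _].
rewrite big_cons ltnNge ltnW //.
Qed.

Lemma big_ord_iota2 (R : comRingType) (N : nat) (P : nat -> nat -> bool) (H : nat -> nat -> R) :
  \prod_(i < N) \prod_(j < N | P i j) H i j =
  \prod_(i <- iota 0 N) \prod_(j <- iota 0 N | P i j) H i j.
Proof.
rewrite -(big_mkord xpredT (fun i => \prod_(j < N | P i j) H i j)) /index_iota subn0.
by apply: eq_bigr => i _; rewrite -big_mkord /index_iota subn0.
Qed.

Lemma enum_iota (n : nat) : enum 'I_n.+1 = map (fun k => inord k) (iota 0 n.+1).
Proof.
rewrite -val_enum_ord -map_comp -[LHS]map_id; apply: eq_map => i /=.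
by rewrite inord_val.
Qed.

Lemma Ps_Pp (R : comRingType) (n : nat) (s : {perm 'I_n.+1}) (t : 'I_n.+1 -> R) :
  Ps s t = Pp t (map s (enum 'I_n.+1)).
Proof.
rewrite enum_iota -map_comp Pp_iota -big_ord_iota2 /Ps.
apply: eq_bigr => i _; apply: eq_big => [j|j _] /=; first by [].
by rewrite !inord_val.
Qed.

Lemma pGT_FP (R : comRingType) (n : nat) (T : {set {set 'I_n.+1}}) (t : 'I_n.+1 -> R) :
  pGT T t = FP (fun u v => [set u; v] \notin T) t (enum 'I_n.+1).
Proof.
rewrite enum_iota FP_iota -(big_ord_iota2 _ (fun i j => (i < j)%N && ([set (inord i : 'I_n.+1); inord j] \notin T))) /pGT.
apply: eq_bigr => i _; apply: eq_big => [j|j _] /=; by rewrite !inord_val.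
Qed.

Lemma list_perm (n : nat) (l : seq 'I_n.+1) :
  perm_eq l (enum 'I_n.+1) -> exists s : {perm 'I_n.+1}, map s (enum 'I_n.+1) = l.
Proof.
move=> pl.
have sl : size l = n.+1 by rewrite (perm_size pl) size_enum_ord.
have ul : uniq l by rewrite (perm_uniq pl) enum_uniq.
have finj : injective (fun i : 'I_n.+1 => nth ord0 l i).
  move=> i j /eqP; rewrite nth_uniq ?sl // => /eqP; exact: val_inj.
exists (perm finj).
apply: (@eq_from_nth _ ord0); first by rewrite size_map size_enum_ord sl.
move=> i; rewrite size_map size_enum_ord => hi.
by rewrite (nth_map ord0) ?size_enum_ord // permE /= (nth_enum_ord _ hi).
Qed.

Lemma nth_map_enum (n : nat) (x : 'I_n.+1) (s1 : {perm 'I_n.+1}) :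
  nth ord0 (map s1 (enum 'I_n.+1)) x = s1 x.
Proof.
rewrite (nth_map ord0); last by rewrite size_enum_ord.
by rewrite nth_ord_enum.
Qed.

Lemma map_perm_inj (n : nat) (s1 s2 : {perm 'I_n.+1}) :
  map s1 (enum 'I_n.+1) = map s2 (enum 'I_n.+1) -> s1 = s2.
Proof.
move=> E; apply/permP => x.
have H : nth ord0 (map s1 (enum 'I_n.+1)) x = nth ord0 (map s2 (enum 'I_n.+1)) x by rewrite E.
by move: H; rewrite !nth_map_enum.
Qed.

Lemma span_to_perm (R : comRingType) (n : nat) (f : ('I_n.+1 -> R) -> R) :
  inspan (Good (enum 'I_n.+1) ord0) f ->
  exists c : {perm 'I_n.+1} -> R, forall t, f t = \sum_(s | fix0 s) c s * Ps s t.
Proof.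
move=> [L [HL Ef]].
exists (fun s => \sum_(cl <- L | cl.2 == map s (enum 'I_n.+1)) cl.1) => t.
rewrite Ef.
transitivity (\sum_(s | fix0 s) \sum_(cl <- L) (if cl.2 == map s (enum 'I_n.+1) then cl.1 * Pp t cl.2 else 0)).
  rewrite exchange_big /=; apply: eq_big_seq => cl clL.
  have /andP [pl hl] := allP HL cl clL.
  have [s0 Es0] := list_perm pl.
  rewrite -big_mkcondr /= (big_pred1 s0) //.
  move=> s /=; apply/andP/eqP => [[_ /eqP E]|->]; first by apply: map_perm_inj; rewrite Es0 E.
  split; last by rewrite Es0.
  rewrite /fix0; move: hl; rewrite -Es0.
  by rewrite -nth0 (nth_map_enum (ord0 : 'I_n.+1)).
apply: eq_bigr => s _; rewrite mulr_suml -big_mkcond /=; apply: eq_bigr => cl /eqP ->.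
by rewrite Ps_Pp.
Qed.

Lemma Pp_shift (R : comRingType) (X : Type) (u : X -> R) (a : R) (l : seq X) :
  Pp (fun i => u i - a) l = Pp u l.
Proof.
elim: l => [|x l IH] //=; rewrite IH; congr (_ * _).
by apply: eq_bigr => y _; rewrite opprB addrA subrK.
Qed.

Lemma enum_cons (n : nat) : enum 'I_n.+1 = ord0 :: behead (enum 'I_n.+1).
Proof.
rewrite enum_iota /=; congr (_ :: _); apply: val_inj; by rewrite /= inordK.
Qed.

Lemma map_enum_head (n : nat) (s : {perm 'I_n.+1}) : fix0 s ->
  map s (enum 'I_n.+1) = ord0 :: behead (map s (enum 'I_n.+1)).
Proof.
move=> /eqP h; rewrite enum_cons /= h //.
Qed.

Lemma perm_map_enum (n : nat) (s : {perm 'I_n.+1}) :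
  perm_eq (map s (enum 'I_n.+1)) (enum 'I_n.+1).
Proof.
apply: uniq_perm; first by rewrite map_inj_uniq ?enum_uniq //; apply: perm_inj.
  exact: enum_uniq.
move=> x; rewrite mem_enum; apply/mapP; exists (s^-1 x)%g; first by rewrite mem_enum.
by rewrite permKV.
Qed.

Lemma part3 (R : realFieldType) (n : nat) (c : {perm 'I_n.+1} -> R) :
  (forall t : 'I_n -> R, \sum_(s | fix0 s) c s * Ps s (ext t) = 0) ->
  forall s, fix0 s -> c s = 0.
Proof.
move=> H.
have H' : forall u : 'I_n.+1 -> R, \sum_(s | fix0 s) c s * Ps s u = 0.
  move=> u; transitivity (\sum_(s | fix0 s) c s * Ps s (ext (fun j => u (lift ord0 j) - u ord0))); last exact: H.
  apply: eq_bigr => s _; congr (_ * _).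
  rewrite !Ps_Pp -(Pp_shift u (u ord0)); apply: Pp_eq => i _.
  rewrite /ext; case: (unliftP ord0 i) => [j ->|->] //; by rewrite subrr.
set vs := behead (enum 'I_n.+1).
have urvs : uniq (ord0 :: vs) by rewrite -enum_cons enum_uniq.
set L := [seq (c s, behead (map s (enum 'I_n.+1))) | s <- [seq s <- index_enum {perm 'I_n.+1} | fix0 s]].
have HL : all (fun cl => perm_eq cl.2 vs) L.
  apply/allP => cl /mapP [s]; rewrite mem_filter => /andP [fs _] -> /=.
  rewrite -(perm_cons ord0) -map_enum_head // -enum_cons; exact: perm_map_enum.
have uL : uniq (map snd L).
  rewrite /L -map_comp map_inj_in_uniq; first by rewrite filter_uniq // index_enum_uniq.
  move=> s1 s2; rewrite !mem_filter => /andP [f1 _] /andP [f2 _] /= E.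
  by apply: map_perm_inj; rewrite map_enum_head // [RHS]map_enum_head // E.
have Hs : forall t, \sum_(cl <- L) cl.1 * Pp t (ord0 :: cl.2) = 0.
  move=> t; transitivity (\sum_(s | fix0 s) c s * Ps s t); last exact: H'.
  rewrite big_map big_filter; apply: eq_bigr => s fs /=.
  by rewrite Ps_Pp [in RHS]map_enum_head.
move=> s fs.
have := @indep R _ ord0 (size vs) vs erefl urvs L HL uL Hs (c s, behead (map s (enum 'I_n.+1))).
apply; apply/mapP; exists s => //; by rewrite mem_filter fs mem_index_enum.
Qed.

Lemma set2_eq (T : finType) (a b c d : T) :
  [set a; b] = [set c; d] -> (a = c /\ b = d) \/ (a = d /\ b = c).
Proof.
move=> E.
have ha : a \in [set c; d] by rewrite -E set21.
have hb : b \in [set c; d] by rewrite -E set22.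
have hc : c \in [set a; b] by rewrite E set21.
have hd : d \in [set a; b] by rewrite E set22.
move: ha hb hc hd => /set2P [] -> /set2P [] -> /set2P [] h /set2P [] h'; subst; tauto.
Qed.

Lemma set2_sym (T : finType) (a b : T) : [set a; b] = [set b; a].
Proof. by rewrite setUC. Qed.

Definition Ts (n : nat) (s : {perm 'I_n.+1}) : {set {set 'I_n.+1}} :=
  [set [set s (inord k); s (inord k.+1)] | k : 'I_n].

Lemma inord_inj (n : nat) (i j : nat) : (i <= n)%N -> (j <= n)%N ->
  (inord i : 'I_n.+1) = inord j -> i = j.
Proof.
move=> hi hj E; have := congr1 (@nat_of_ord _) E; by rewrite !inordK.
Qed.

Lemma Ts_mem (n : nat) (s : {perm 'I_n.+1}) (i j : nat) : (i < j <= n)%N ->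
  ([set s (inord i); s (inord j)] \in Ts s) = (j == i.+1).
Proof.
move=> /andP [ij jn].
apply/imsetP/eqP => [[k _ E]|->].
  have kn := ltn_ord k.
  case: (set2_eq E) => [[E1 E2]|[E1 E2]].
    have e1 : i = k by apply: (inord_inj _ _ (perm_inj E1)); lia.
    have e2 : j = k.+1 by apply: (inord_inj _ _ (perm_inj E2)); lia.
    lia.
  have e1 : i = k.+1 by apply: (inord_inj _ _ (perm_inj E1)); lia.
  have e2 : j = k by apply: (inord_inj _ _ (perm_inj E2)); lia.
  lia.
have h : (i < n)%N by lia.
by exists (Ordinal h).
Qed.

Lemma tree_adj_sym (n : nat) (T : {set {set 'I_n.+1}}) : symmetric (tree_adj T).
Proof. by move=> u v; rewrite /tree_adj set2_sym. Qed.

Lemma Ts_spanning (n : nat) (s : {perm 'I_n.+1}) : spanning_tree (Ts s).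
Proof.
apply/and3P; split.
- apply/forall_inP => e /imsetP [k _ ->]; rewrite cards2.
  suff -> : s (inord k) != s (inord k.+1) by [].
  apply/eqP => E; have h := ltn_ord k.
  have := inord_inj (ltnW h) h (perm_inj E); lia.
- rewrite card_imset ?card_ord //.
  move=> k1 k2 E; apply: val_inj; have h1 := ltn_ord k1; have h2 := ltn_ord k2.
  case: (set2_eq E) => [[E1 E2]|[E1 E2]].
    by apply: (inord_inj _ _ (perm_inj E1)); lia.
  have e1 : val k1 = k2.+1 by apply: (inord_inj _ _ (perm_inj E1)); lia.
  have e2 : (val k1).+1 = k2 by apply: (inord_inj _ _ (perm_inj E2)); lia.
  lia.
- have C0 : forall k, (k <= n)%N -> connect (tree_adj (Ts s)) (s (inord 0)) (s (inord k)).
    elim => [|k IH] hk; first exact: connect0.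
    apply: (connect_trans (IH (ltnW hk))); apply: connect1.
    have h : (k < n)%N by [].
    by rewrite /tree_adj; apply/imsetP; exists (Ordinal h).
  have Cu : forall u, connect (tree_adj (Ts s)) (s (inord 0)) u.
    move=> u; have := C0 (s^-1 u)%g (leq_ord _); by rewrite inord_val permKV.
  apply/forallP => u; apply/forallP => v.
  apply: (connect_trans _ (Cu v)).
  by rewrite (sym_connect_sym (tree_adj_sym (Ts s))).
Qed.

Lemma FP_Pp_path (R : comRingType) (n : nat) (s : {perm 'I_n.+1}) (t : 'I_n.+1 -> R) :
  FP (fun u v => [set u; v] \notin Ts s) t (map s (enum 'I_n.+1)) = Pp t (map s (enum 'I_n.+1)).
Proof.
rewrite enum_iota -map_comp FP_iota Pp_iota.
apply: eq_big_seq => i; rewrite mem_iota => /andP [_ hi].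
rewrite big_seq_cond [RHS]big_seq_cond; apply: eq_bigl => j.
case: (boolP (j \in iota 0 n.+1)) => [hj'|//]; move: hj'; rewrite mem_iota => /andP [_ hj].
case: (ltnP i j) => //= ij.
rewrite Ts_mem; last by apply/andP; split => //; lia.
by [].
Qed.

Lemma part1 (R : comRingType) (n : nat) (s : {perm 'I_n.+1}) :
  exists d : {set {set 'I_n.+1}} -> R,
    forall t : 'I_n -> R,
      Ps s (ext t) = \sum_(T | spanning_tree T) d T * pGT T (ext t).
Proof.
have symP : forall u v : 'I_n.+1, ([set u; v] \notin Ts s) = ([set v; u] \notin Ts s).
  by move=> u v; rewrite set2_sym.
have [e [ee He]] := @FP_perm R _ _ symP _ _ (perm_map_enum s).
exists (fun T => if T == Ts s then e else 0) => t.
rewrite (bigD1 (Ts s)) ?Ts_spanning //= eqxx big1 ?addr0; last first.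
  by move=> T /andP [_ /negbTE ->]; rewrite mul0r.
by rewrite Ps_Pp -FP_Pp_path He pGT_FP.
Qed.

Lemma exists_order (n : nat) (T : {set {set 'I_n.+1}})
  (conn : forall u v, connect (tree_adj T) u v) :
  forall k, (k <= n)%N -> exists W : seq 'I_n.+1, exists par : nat -> nat,
    [/\ size W = k.+1, uniq W, head ord0 W = ord0 &
        forall i, (0 < i < size W)%N -> (par i < i)%N /\ [set nth ord0 W (par i); nth ord0 W i] \in T].
Proof.
elim => [|k IH] hk.
  by exists [:: ord0], id; split => // i; case: i.
have [W [par [sW uW hW HW]]] := IH (ltnW hk).
have [x xW] : exists x, x \notin W.
  case: (pickP (fun x => x \notin W)) => [x xW|H]; first by exists x.
  have : (size (enum 'I_n.+1) <= size W)%N.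
    apply: uniq_leq_size; first exact: enum_uniq.
    by move=> y _; have := H y; move/negbT; rewrite negbK.
  by rewrite size_enum_ord sW; lia.
have [u [v [uinW vW e]]] : exists u v, [/\ u \in W, v \notin W & tree_adj T u v].
  case: (boolP [exists u, exists v, [&& u \in W, v \notin W & tree_adj T u v]]).
    by move=> /existsP [u /existsP [v /and3P [? ? ?]]]; exists u, v.
  move=> /negP Hn; exfalso.
  have cl : closed (tree_adj T) W.
    move=> a b ab; apply/idP/idP => [aW|bW]; apply/negPn/negP => nW; apply: Hn.
      by apply/existsP; exists a; apply/existsP; exists b; rewrite aW nW ab.
    apply/existsP; exists b; apply/existsP; exists a; rewrite bW nW /=.
    by rewrite tree_adj_sym.
  have := closed_connect cl (conn ord0 x).
  have -> : ord0 \in W by case: (W) hW sW => [//|y W'] /= -> _; rewrite mem_head.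
  by rewrite (negbTE xW).
exists (rcons W v), (fun i => if i == size W then index u W else par i); split.
- by rewrite size_rcons sW.
- by rewrite rcons_uniq vW uW.
- by case: (W) hW sW.
move=> i; rewrite size_rcons => /andP [i0 iW].
case: (eqVneq i (size W)) => [->|iW'].
  split; first by rewrite index_mem.
  rewrite nth_rcons index_mem uinW nth_index // nth_rcons ltnn eqxx.
  exact: e.
have iW2 : (i < size W)%N by lia.
have [p1 p2] := HW i (introT andP (conj i0 iW2)).
split => //.
by rewrite !nth_rcons iW2 (ltn_trans p1 iW2).
Qed.

Lemma unique_par (n : nat) (T : {set {set 'I_n.+1}}) (W : seq 'I_n.+1) (par : nat -> nat) :
  #|T| = n -> size W = n.+1 -> uniq W ->
  (forall i, (0 < i < size W)%N -> (par i < i)%N /\ [set nth ord0 W (par i); nth ord0 W i] \in T) ->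
  forall j k, (j < k < size W)%N -> [set nth ord0 W j; nth ord0 W k] \in T -> j = par k.
Proof.
move=> cT sW uW HW.
pose g (m : 'I_n) := [set nth ord0 W (par m.+1); nth ord0 W m.+1].
have nthI : forall a b, (a < size W)%N -> (b < size W)%N -> nth ord0 W a = nth ord0 W b -> a = b.
  by move=> a b ha hb /eqP; rewrite nth_uniq // => /eqP.
have gT : forall m : 'I_n, g m \in T.
  move=> m; have hm := ltn_ord m; have [_ ok] := HW m.+1 (ltac:(by rewrite sW; lia)); exact: ok.
have ginj : injective g.
  move=> m1 m2 E; apply: ord_inj; have h1 := ltn_ord m1; have h2 := ltn_ord m2.
  have [q1 _] := HW m1.+1 (ltac:(by rewrite sW; lia)).
  have [q2 _] := HW m2.+1 (ltac:(by rewrite sW; lia)).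
  have b1 : (m1.+1 < size W)%N by rewrite sW; lia.
  have b2 : (m2.+1 < size W)%N by rewrite sW; lia.
  have b3 : (par m1.+1 < size W)%N by rewrite sW; lia.
  have b4 : (par m2.+1 < size W)%N by rewrite sW; lia.
  case: (set2_eq E) => [[E1 E2]|[E1 E2]].
    have := nthI _ _ b1 b2 E2; lia.
  have := nthI _ _ b3 b2 E1.
  have := nthI _ _ b1 b4 E2.
  lia.
have imT : [set g m | m in 'I_n] = T.
  apply/eqP; rewrite eqEcard card_imset // card_ord cT leqnn andbT.
  by apply/subsetP => e /imsetP [m _ ->].
move=> j k /andP [jk kW] jkT.
rewrite -imT in jkT; case/imsetP: jkT => m _ E.
have hm := ltn_ord m.
have [q _] := HW m.+1 (ltac:(by rewrite sW; lia)).
have bj : (j < size W)%N by lia.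
have bk : (k < size W)%N by lia.
have bm : (m.+1 < size W)%N by rewrite sW; lia.
have bp : (par m.+1 < size W)%N by rewrite sW; lia.
case: (set2_eq E) => [[E1 E2]|[E1 E2]].
  have e2 := nthI _ _ bk bm E2.
  have e1 := nthI _ _ bj bp E1.
  by rewrite e2 e1.
have e1 := nthI _ _ bj bm E1.
have e2 := nthI _ _ bk bp E2.
lia.
Qed.

Lemma part2 (R : comRingType) (n : nat) (T : {set {set 'I_n.+1}}) :
  spanning_tree T ->
  exists c : {perm 'I_n.+1} -> R,
    forall t : 'I_n -> R, pGT T (ext t) = \sum_(s | fix0 s) c s * Ps s (ext t).
Proof.
move=> /and3P [_ /eqP cT /forallP Hc].
have conn : forall u v, connect (tree_adj T) u v by move=> u v; exact: (forallP (Hc u) v).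
have [W [par [sW uW hW HW]]] := exists_order conn (leqnn n).
set P := fun u v : 'I_n.+1 => [set u; v] \notin T.
have symP : forall u v, P u v = P v u by move=> u v; rewrite /P set2_sym.
have tp : treeprop P ord0 W.
  move=> k /andP [k0 kW].
  have [pk pT] := HW k (introT andP (conj k0 kW)).
  exists (nth ord0 W (par k)).
    by rewrite -(nth_take _ pk) mem_nth // size_take kW.
  move=> u uk.
  have ju : (index u (take k W) < k)%N.
    by move: (index_mem u (take k W)); rewrite uk size_take kW.
  have Eu : u = nth ord0 W (index u (take k W)).
    by rewrite -(nth_take _ ju) nth_index.
  rewrite /P Eu; congr (~~ _); apply/idP/eqP => [inT|->] //.
  congr (nth _ _ _).
  apply: (unique_par cT sW uW HW) => //; by rewrite ju kW.
have WN : W != [::] by rewrite -size_eq0 sW.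
have Hsp := @tree_span R _ P ord0 W uW WN hW tp.
have pW : perm_eq (enum 'I_n.+1) W.
  apply: uniq_perm; [exact: enum_uniq | exact: uW |].
  have cW : #|[pred x in W]| = #|'I_n.+1|.
    by rewrite (card_uniqP uW) sW card_ord.
  move=> x; rewrite mem_enum; symmetry.
  by have /subset_cardP /(_ (subset_predT _)) := cW; move=> /(_ x).
have [e [ee He]] := @FP_perm R _ _ symP _ _ pW.
have Hsp2 : inspan (Good (enum 'I_n.+1) ord0) (fun t : 'I_n.+1 -> R => pGT T t).
  apply: (@inspan_ext R _ _ (fun t => e * FP P t W)).
    by move=> t; rewrite pGT_FP He.
  apply: inspan_scale; apply: (inspan_mono _ Hsp) => l /andP [pl hl].
  by rewrite /Good hl andbT (perm_trans pl) // perm_sym.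
have [c Hcc] := span_to_perm Hsp2.
by exists c => t; apply: Hcc.
Qed.

Unset Implicit Arguments.

Theorem corollary3p2 (R : realFieldType) (n : nat) :
  (forall s : {perm 'I_n.+1}, fix0 s ->
     exists d : {set {set 'I_n.+1}} -> R,
       forall t : 'I_n -> R,
         Ps s (ext t) = \sum_(T | spanning_tree T) d T * pGT T (ext t)) /\
  (forall T : {set {set 'I_n.+1}}, spanning_tree T ->
     exists c : {perm 'I_n.+1} -> R,
       forall t : 'I_n -> R,
         pGT T (ext t) = \sum_(s | fix0 s) c s * Ps s (ext t)) /\
  (forall c : {perm 'I_n.+1} -> R,
     (forall t : 'I_n -> R, \sum_(s | fix0 s) c s * Ps s (ext t) = 0) ->
     forall s, fix0 s -> c s = 0).
Proof.
split; first by move=> s _; apply: part1.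
split; first by move=> T HT; apply: part2.
exact: part3.
Qed.
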